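(* Let $N\in\mathbb{C}^{m\times n}$ have rank $r$ and singular value decomposition $N=U\begin{pmatrix}\Sigma & 0\\ 0 & 0\end{pmatrix}V^{\ast}$, where $\Sigma\in\mathbb{C}^{r\times r}$ is diagonal with positive diagonal entries and $U\in\mathbb{C}^{m\times m}$, $V\in\mathbb{C}^{n\times n}$ are unitary. Let $X\in\mathbb{C}^{m\times m}$ and $Y\in\mathbb{C}^{n\times n}$ be nonsingular and let $M=XNY$. Assume that $X=U\begin{pmatrix}X_{1} & 0\\ X_{2} & X_{4}\end{pmatrix}U^{\ast}$ for some blocks $X_{1}\in\mathbb{C}^{r\times r}$, $X_{2}\in\mathbb{C}^{(m-r)\times r}$, $X_{4}\in\mathbb{C}^{(m-r)\times(m-r)}$, and $Y=V\begin{pmatrix}Y_{1} & Y_{3}\\ 0 & Y_{4}\end{pmatrix}V^{\ast}$ for some blocks $Y_{1}\in\mathbb{C}^{r\times r}$, $Y_{3}\in\mathbb{C}^{r\times(n-r)}$, $Y_{4}\in\mathbb{C}^{(n-r)\times(n-r)}$. If both $XE_{N}$ and $F_{N}Y$ are Hermitian, then $$M^{\dagger}=(I+L^{\ast})(I+LL^{\ast})^{-1}Y^{-1}N^{\dagger}X^{-1}(I+R^{\ast}R)^{-1}(I+R^{\ast}),$$ where $R=XE_{N}X^{-1}(E_{N}-I)$ and $L=(F_{N}-I)Y^{-1}F_{N}Y$.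
   Context: For a complex matrix $A$, $A^{\ast}$ is its conjugate transpose and $A^{\dagger}$ its Moore--Penrose inverse. $E_{A}:=I-AA^{\dagger}$ and $F_{A}:=I-A^{\dagger}A$. $I$ denotes an identity matrix of the appropriate size. *)

(* Defs.v *)
From HB Require Import structures.
From mathcomp Require Import all_boot all_order all_algebra.
From Stdlib Require Import ClassicalEpsilon.
Set Implicit Arguments. Unset Strict Implicit. Unset Printing Implicit Defensive.
Import GRing.Theory Num.Theory.
Local Open Scope ring_scope.

Definition ctmx (C : numClosedFieldType) (m n : nat) (A : 'M[C]_(m, n))
  : 'M[C]_(n, m) := (map_mx Num.conj A)^T.

Definition is_mp_inverse (C : numClosedFieldType) (m n : nat)
  (A : 'M[C]_(m, n)) (X : 'M[C]_(n, m)) : Prop :=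
  [/\ A *m X *m A = A, X *m A *m X = X,
      ctmx (A *m X) = A *m X & ctmx (X *m A) = X *m A].

(* The Moore--Penrose inverse A^dagger: the (unique, always existing)
   matrix satisfying the Penrose equations. *)
Definition pinv (C : numClosedFieldType) (m n : nat) (A : 'M[C]_(m, n))
  : 'M[C]_(n, m) :=
  epsilon (inhabits 0) (fun X => is_mp_inverse A X).

Definition EA (C : numClosedFieldType) (m n : nat) (A : 'M[C]_(m, n))
  : 'M[C]_m := 1%:M - A *m pinv A.
Definition FA (C : numClosedFieldType) (m n : nat) (A : 'M[C]_(m, n))
  : 'M[C]_n := 1%:M - pinv A *m A.

Definition unitary_mx (C : numClosedFieldType) (n : nat) (U : 'M[C]_n) : Prop :=
  U *m ctmx U = 1%:M /\ ctmx U *m U = 1%:M.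

Definition hermitian_mx (C : numClosedFieldType) (n : nat) (A : 'M[C]_n) : Prop :=
  ctmx A = A.

(* Main.v *)
Require Import Defs.
From HB Require Import structures.
From mathcomp Require Import all_boot all_order all_algebra.
From Stdlib Require Import ClassicalEpsilon.
Import GRing.Theory Num.Theory.
Local Open Scope ring_scope.
Set Implicit Arguments. Unset Strict Implicit. Unset Printing Implicit Defensive.

Ltac bsimp := rewrite ?mulmx_block ?(mulmx0, mul0mx, mulmx1, mul1mx, addr0, add0r,
  subr0, sub0r, oppr0, mulmxN, mulNmx, opprK, subrr).

Section CT.
Variable C : numClosedFieldType.

Lemma ctmx_mul m n k (A : 'M[C]_(m, n)) (B : 'M[C]_(n, k)) :
  ctmx (A *m B) = ctmx B *m ctmx A.
Proof. by rewrite /ctmx map_mxM trmx_mul. Qed.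

Lemma ctmxK m n (A : 'M[C]_(m, n)) : ctmx (ctmx A) = A.
Proof. by apply/matrixP=> i j; rewrite /ctmx !mxE conjCK. Qed.

Lemma ctmx1 n : ctmx (1%:M : 'M[C]_n) = 1%:M.
Proof. by rewrite /ctmx map_mx1 trmx1. Qed.

Lemma ctmx0 m n : ctmx (0 : 'M[C]_(m, n)) = 0.
Proof. by rewrite /ctmx map_mx0 trmx0. Qed.

Lemma ctmxD m n (A B : 'M[C]_(m, n)) : ctmx (A + B) = ctmx A + ctmx B.
Proof. by rewrite /ctmx map_mxD linearD. Qed.

Lemma ctmxN m n (A : 'M[C]_(m, n)) : ctmx (- A) = - ctmx A.
Proof. by rewrite /ctmx map_mxN linearN. Qed.

Lemma ctmx_block m1 m2 n1 n2 (a : 'M[C]_(m1, n1)) (b : 'M[C]_(m1, n2))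
  (c : 'M[C]_(m2, n1)) (d : 'M[C]_(m2, n2)) :
  ctmx (block_mx a b c d) = block_mx (ctmx a) (ctmx c) (ctmx b) (ctmx d).
Proof. by rewrite /ctmx map_block_mx tr_block_mx. Qed.

Lemma ctmx_row m n1 n2 (a : 'M[C]_(m, n1)) (b : 'M[C]_(m, n2)) :
  ctmx (row_mx a b) = col_mx (ctmx a) (ctmx b).
Proof. by rewrite /ctmx map_row_mx tr_row_mx. Qed.

Lemma ctmx_col m1 m2 n (a : 'M[C]_(m1, n)) (b : 'M[C]_(m2, n)) :
  ctmx (col_mx a b) = row_mx (ctmx a) (ctmx b).
Proof. by rewrite /ctmx map_col_mx tr_col_mx. Qed.

Lemma inv_uniq n (A B : 'M[C]_n) : A *m B = 1%:M -> invmx A = B.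
Proof.
move=> AB; have [Au _] := mulmx1_unit AB.
by rewrite -[invmx A]mulmx1 -AB mulmxA mulVmx // mul1mx.
Qed.

Lemma ctmx_inv n (A : 'M[C]_n) : A \in unitmx -> ctmx (invmx A) = invmx (ctmx A).
Proof.
by move=> Au; apply/esym/inv_uniq; rewrite -ctmx_mul mulVmx // ctmx1.
Qed.


Lemma mp_uniq m n (A : 'M[C]_(m, n)) Z1 Z2 :
  is_mp_inverse A Z1 -> is_mp_inverse A Z2 -> Z1 = Z2.
Proof.
case=> a1 b1 c1 d1 [a2 b2 c2 d2].
have e1 : Z1 = Z1 *m A *m Z2.
  transitivity (Z1 *m ctmx Z1 *m ctmx A).
    by rewrite -mulmxA -ctmx_mul c1 mulmxA b1.
  rewrite -{1}a2 !ctmx_mul !mulmxA -(mulmxA Z1) -ctmx_mul c1.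
  rewrite -(mulmxA _ (ctmx Z2)) -ctmx_mul c2 !mulmxA b1 //.
have e2 : Z2 = Z1 *m A *m Z2.
  transitivity (ctmx A *m ctmx Z2 *m Z2).
    by rewrite -ctmx_mul d2 b2.
  have h1 : ctmx A *m ctmx Z1 = Z1 *m A by rewrite -ctmx_mul d1.
  have h2 : ctmx A *m ctmx Z2 = Z2 *m A by rewrite -ctmx_mul d2.
  rewrite -{1}a1 !ctmx_mul !mulmxA h1 -(mulmxA _ (ctmx A)) h2.
  by rewrite -[in RHS]b2 !mulmxA.
by rewrite e1 -e2.
Qed.

Lemma pinv_eq m n (A : 'M[C]_(m, n)) Z : is_mp_inverse A Z -> pinv A = Z.
Proof.
move=> HZ; apply: (mp_uniq _ HZ); rewrite /pinv.
by apply: epsilon_spec; exists Z.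
Qed.

Lemma normsq_ge0 n (w : 'rV[C]_n) : 0 <= (w *m ctmx w) 0 0.
Proof.
rewrite mxE; apply: sumr_ge0 => j _; rewrite /ctmx !mxE; exact: mul_conjC_ge0.
Qed.

Lemma normsq_eq0 n (w : 'rV[C]_n) : (w *m ctmx w) 0 0 = 0 -> w = 0.
Proof.
rewrite mxE => /eqP; rewrite psumr_eq0 => [/allP H|j _]; last first.
  by rewrite /ctmx !mxE; exact: mul_conjC_ge0.
apply/matrixP=> i j; rewrite (ord1 i) mxE.
have := H j (mem_index_enum _); rewrite /ctmx !mxE mul_conjC_eq0 => /eqP //.
Qed.

Lemma unit_1ctmx n k (A : 'M[C]_(k, n)) : 1%:M + ctmx A *m A \in unitmx.
Proof.
rewrite -row_free_unit; apply: inj_row_free => v.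
rewrite mulmxDr mulmx1 => Hv.
have H0 : (v *m ctmx v) + (v *m ctmx A) *m ctmx (v *m ctmx A) = 0.
  by rewrite ctmx_mul ctmxK !mulmxA -mulmxDl -(mulmxA v) Hv mul0mx.
have E1 : forall M N : 'M[C]_1, (M + N) 0 0 = M 0 0 + N 0 0 by move=> *; rewrite mxE.
have E2 : (0 : 'M[C]_1) 0 0 = 0 by rewrite mxE.
have := congr1 (fun M : 'M[C]_1 => M 0 0) H0; rewrite /= E1 E2 => /eqP.
rewrite paddr_eq0 ?normsq_ge0 // => /andP[/eqP /normsq_eq0 -> _] //.
Qed.

Definition tw m n (P : 'M[C]_m) (Q : 'M[C]_n) (A : 'M[C]_(m, n)) := P *m A *m ctmx Q.

Lemma twM m n k (P : 'M[C]_m) (Q : 'M[C]_n) (S : 'M[C]_k) A B :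
  ctmx Q *m Q = 1%:M -> tw P Q A *m tw Q S B = tw P S (A *m B).
Proof.
by move=> hQ; rewrite /tw !mulmxA -(mulmxA _ (ctmx Q)) hQ mulmx1.
Qed.

Lemma tw1 n (P : 'M[C]_n) : P *m ctmx P = 1%:M -> tw P P 1%:M = 1%:M.
Proof. by move=> h; rewrite /tw mulmx1. Qed.

Lemma twD m n (P : 'M[C]_m) (Q : 'M[C]_n) A B : tw P Q (A + B) = tw P Q A + tw P Q B.
Proof. by rewrite /tw mulmxDr mulmxDl. Qed.

Lemma twN m n (P : 'M[C]_m) (Q : 'M[C]_n) A : tw P Q (- A) = - tw P Q A.
Proof. by rewrite /tw mulmxN mulNmx. Qed.

Lemma twB m n (P : 'M[C]_m) (Q : 'M[C]_n) A B : tw P Q (A - B) = tw P Q A - tw P Q B.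
Proof. by rewrite twD twN. Qed.

Lemma ctmx_tw m n (P : 'M[C]_m) (Q : 'M[C]_n) A : ctmx (tw P Q A) = tw Q P (ctmx A).
Proof. by rewrite /tw !ctmx_mul ctmxK mulmxA. Qed.

Lemma inv_tw n (U : 'M[C]_n) A : unitary_mx U -> invmx (tw U U A) = tw U U (invmx A).
Proof.
move=> [h1 h2]; have [Uu Ucu] := mulmx1_unit h1.
case: (boolP (A \in unitmx)) => Au.
  by apply: inv_uniq; rewrite twM // mulmxV // tw1.
have nu : tw U U A \notin unitmx.
  by rewrite /tw !unitmx_mul Uu Ucu (negbTE Au).
by rewrite !invmx_out ?inE.
Qed.

Lemma pinv_tw m n (P : 'M[C]_m) (Q : 'M[C]_n) A Z :
  unitary_mx P -> unitary_mx Q -> is_mp_inverse A Z -> pinv (tw P Q A) = tw Q P Z.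
Proof.
move=> [p1 p2] [q1 q2] [a b c d]; apply: pinv_eq.
by split; rewrite ?twM // ?a ?b // ctmx_tw; [rewrite c | rewrite d].
Qed.

Lemma mp_fact m n k (B : 'M[C]_(m, k)) (Cm : 'M[C]_(k, n)) B' C' :
  B' *m B = 1%:M -> Cm *m C' = 1%:M ->
  ctmx (B *m B') = B *m B' -> ctmx (C' *m Cm) = C' *m Cm ->
  is_mp_inverse (B *m Cm) (C' *m B').
Proof.
move=> h1 h2 h3 h4; split.
- by rewrite !mulmxA -(mulmxA B) h2 mulmx1 -(mulmxA B) h1 mulmx1.
- by rewrite !mulmxA -(mulmxA C') h1 mulmx1 -(mulmxA C') h2 mulmx1.
- by rewrite !mulmxA -(mulmxA B) h2 mulmx1.
- by rewrite !mulmxA -(mulmxA C') h1 mulmx1.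
Qed.

Lemma tilde r p q (D : 'M[C]_r) (X1 : 'M[C]_r) (X2 : 'M[C]_(p, r)) (X4 : 'M[C]_p)
  (Y1 : 'M[C]_r) (Y3 : 'M[C]_(r, q)) (Y4 : 'M[C]_q) :
  D \in unitmx -> X1 \in unitmx -> X4 \in unitmx -> Y1 \in unitmx -> Y4 \in unitmx ->
  let Xt := block_mx X1 0 X2 X4 in
  let Yt := block_mx Y1 Y3 0 Y4 in
  let Nt := block_mx D 0 0 0 : 'M_(r + p, r + q) in
  let Ntp := block_mx (invmx D) 0 0 0 : 'M_(r + q, r + p) in
  let Et := block_mx 0 0 0 1%:M : 'M_(r + p) in
  let Ft := block_mx 0 0 0 1%:M : 'M_(r + q) in
  let Rt := Xt *m Et *m invmx Xt *m (Et - 1%:M) in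
  let Lt := (Ft - 1%:M) *m invmx Yt *m Ft *m Yt in
  is_mp_inverse (Xt *m Nt *m Yt)
   ((1%:M + ctmx Lt) *m invmx (1%:M + Lt *m ctmx Lt) *m invmx Yt *m Ntp
      *m invmx Xt *m invmx (1%:M + ctmx Rt *m Rt) *m (1%:M + ctmx Rt)).
Proof.
move=> Du X1u X4u Y1u Y4u Xt Yt Nt Ntp Et Ft Rt Lt.
set X1i := invmx X1; set X4i := invmx X4; set Y1i := invmx Y1; set Y4i := invmx Y4.
set Di := invmx D.
have hXi : invmx Xt = block_mx X1i 0 (- (X4i *m X2 *m X1i)) X4i.
  apply: inv_uniq; rewrite /Xt; bsimp.
  by rewrite !mulmxA !mulmxV // !mul1mx subrr -scalar_mx_block.
have hYi : invmx Yt = block_mx Y1i (- (Y1i *m Y3 *m Y4i)) 0 Y4i.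
  apply: inv_uniq; rewrite /Yt; bsimp.
  by rewrite !mulmxA !mulmxV // !mul1mx addNr -scalar_mx_block.
set K := X2 *m X1i; set J := Y1i *m Y3.
have hR : Rt = block_mx 0 0 K 0.
  rewrite /Rt hXi /Xt /Et (scalar_mx_block r p) opp_block_mx add_block_mx; bsimp.
  by rewrite !mulmxA mulmxV // mul1mx.
have hL : Lt = block_mx 0 J 0 0.
  rewrite /Lt hYi /Yt /Ft (scalar_mx_block r q) opp_block_mx add_block_mx; bsimp.
  by rewrite -(mulmxA _ Y4i) mulVmx // mulmx1.
have Gu : 1%:M + ctmx K *m K \in unitmx by apply: unit_1ctmx.
have Hu : 1%:M + J *m ctmx J \in unitmx.
  by rewrite -{1}(ctmxK J); apply: unit_1ctmx.
set G := invmx (1%:M + ctmx K *m K); set H := invmx (1%:M + J *m ctmx J).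
have h1 : invmx (1%:M + ctmx Rt *m Rt) = block_mx G 0 0 1%:M.
  apply: inv_uniq; rewrite hR ctmx_block !ctmx0; bsimp.
  rewrite (scalar_mx_block r p) add_block_mx; bsimp.
  by rewrite mulmxV // -scalar_mx_block.
have h2 : 1%:M + ctmx Rt = block_mx 1%:M (ctmx K) 0 1%:M.
  by rewrite hR ctmx_block !ctmx0 (scalar_mx_block r p) add_block_mx; bsimp.
have h3 : invmx (1%:M + Lt *m ctmx Lt) = block_mx H 0 0 1%:M.
  apply: inv_uniq; rewrite hL ctmx_block !ctmx0; bsimp.
  rewrite (scalar_mx_block r q) add_block_mx; bsimp.
  by rewrite mulmxV // -scalar_mx_block.
have h4 : 1%:M + ctmx Lt = block_mx 1%:M 0 (ctmx J) 1%:M.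
  by rewrite hL ctmx_block !ctmx0 (scalar_mx_block r q) add_block_mx; bsimp.
rewrite h1 h2 h3 h4 hXi hYi /Ntp; bsimp.
have eX2 : X2 = K *m X1 by rewrite /K -mulmxA mulVmx // mulmx1.
have eY3 : Y3 = Y1 *m J by rewrite /J mulmxA mulmxV // mul1mx.
have cG : ctmx G = G.
  by rewrite /G ctmx_inv // ctmxD ctmx1 ctmx_mul ctmxK.
have cH : ctmx H = H.
  by rewrite /H ctmx_inv // ctmxD ctmx1 ctmx_mul ctmxK.
have -> : block_mx (X1 *m D *m Y1) (X1 *m D *m Y3) (X2 *m D *m Y1) (X2 *m D *m Y3)
   = col_mx X1 X2 *m row_mx (D *m Y1) (D *m Y3).
  by rewrite mul_col_row !mulmxA.
set Di' := invmx D.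
have -> : block_mx (H *m Y1i *m Di' *m X1i *m G) (H *m Y1i *m Di' *m X1i *m G *m ctmx K)
    (ctmx J *m H *m Y1i *m Di' *m X1i *m G) (ctmx J *m H *m Y1i *m Di' *m X1i *m G *m ctmx K)
  = col_mx (H *m Y1i *m Di') (ctmx J *m H *m Y1i *m Di') *m row_mx (X1i *m G) (X1i *m G *m ctmx K).
  by rewrite mul_col_row !mulmxA.
apply: mp_fact.
- rewrite eX2.
  transitivity (X1i *m (G *m (1%:M + ctmx K *m K)) *m X1).
    by rewrite mul_row_col mulmxDr mulmx1 mulmxDr mulmxDl !mulmxA.
  by rewrite mulVmx // mulmx1 mulVmx.
- rewrite mul_row_col eY3.
  transitivity (D *m Y1 *m ((1%:M + J *m ctmx J) *m H) *m Y1i *m Di').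
    by rewrite mulmxDl mul1mx mulmxDr !mulmxDl !mulmxA.
  by rewrite mulmxV // mulmx1 -(mulmxA D) mulmxV // mulmx1 mulmxV.
- rewrite mul_col_row !mulmxA mulmxV // mul1mx -/K ctmx_block !ctmx_mul cG ctmxK.
  by rewrite ctmxK /K !mulmxA.
- have e1 : forall k (Z : 'M_(k, r)), Z *m Y1i *m Di' *m (D *m Y1) = Z.
    move=> k Z; rewrite !mulmxA -(mulmxA _ Di') mulVmx // mulmx1.
    by rewrite -mulmxA mulVmx // mulmx1.
  have e2 : forall k (Z : 'M_(k, r)), Z *m Y1i *m Di' *m (D *m Y3) = Z *m J.
    by move=> k Z; rewrite eY3 (mulmxA D) mulmxA e1.
  rewrite mul_col_row !e1 !e2 ctmx_block !ctmx_mul cH ctmxK.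
  by rewrite ctmxK /J !mulmxA.
Qed.

Lemma tw1D n (P : 'M[C]_n) A : P *m ctmx P = 1%:M -> 1%:M + tw P P A = tw P P (1%:M + A).
Proof. by move=> h; rewrite twD tw1. Qed.
End CT.

Theorem corollary3p4 (C : numClosedFieldType) (r p q : nat)
  (N : 'M[C]_(r + p, r + q)) (U : 'M[C]_(r + p)) (V : 'M[C]_(r + q))
  (d : 'rV[C]_r)
  (X : 'M[C]_(r + p)) (Y : 'M[C]_(r + q))
  (X1 : 'M[C]_r) (X2 : 'M[C]_(p, r)) (X4 : 'M[C]_p)
  (Y1 : 'M[C]_r) (Y3 : 'M[C]_(r, q)) (Y4 : 'M[C]_q) :
  \rank N = r ->
  (forall i, 0 < d 0 i) ->
  unitary_mx U -> unitary_mx V ->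
  N = U *m block_mx (diag_mx d) 0 0 0 *m ctmx V ->
  X \in unitmx -> Y \in unitmx ->
  X = U *m block_mx X1 0 X2 X4 *m ctmx U ->
  Y = V *m block_mx Y1 Y3 0 Y4 *m ctmx V ->
  hermitian_mx (X *m EA N) -> hermitian_mx (FA N *m Y) ->
  let M := X *m N *m Y in
  let R := X *m EA N *m invmx X *m (EA N - 1%:M) in
  let L := (FA N - 1%:M) *m invmx Y *m FA N *m Y in
  pinv M =
    (1%:M + ctmx L) *m invmx (1%:M + L *m ctmx L) *m invmx Y *m pinv N
      *m invmx X *m invmx (1%:M + ctmx R *m R) *m (1%:M + ctmx R).
Proof.
move=> _ hd hU hV hN hXu hYu hX hY _ _ M R L.
have [U1 U2] := hU; have [V1 V2] := hV.
set D := diag_mx d.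
have Du : D \in unitmx.
  rewrite unitmxE det_diag unitfE; apply/prodf_neq0 => i _.
  by rewrite lt0r_neq0 // hd.
pose Xt := block_mx X1 0 X2 X4; pose Yt := block_mx Y1 Y3 0 Y4.
pose Nt : 'M[C]_(r + p, r + q) := block_mx D 0 0 0.
pose Ntp : 'M[C]_(r + q, r + p) := block_mx (invmx D) 0 0 0.
pose Et : 'M[C]_(r + p) := block_mx 0 0 0 1%:M.
pose Ft : 'M[C]_(r + q) := block_mx 0 0 0 1%:M.
have hN' : N = tw U V Nt by [].
have hX' : X = tw U U Xt by [].
have hY' : Y = tw V V Yt by [].
have Xtu : Xt \in unitmx by move: hXu; rewrite hX !unitmx_mul => /andP[/andP[]].
have Ytu : Yt \in unitmx by move: hYu; rewrite hY !unitmx_mul => /andP[/andP[]].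
have [X1u X4u] : X1 \in unitmx /\ X4 \in unitmx.
  by move: Xtu; rewrite !unitmxE det_lblock unitrM => /andP.
have [Y1u Y4u] : Y1 \in unitmx /\ Y4 \in unitmx.
  by move: Ytu; rewrite !unitmxE det_ublock unitrM => /andP.
have hNp : is_mp_inverse Nt Ntp.
  rewrite /Nt /Ntp; split; bsimp; rewrite ?mulmxV ?mulVmx ?mul1mx //;
    by rewrite ctmx_block !ctmx0 ctmx1.
have pN : pinv N = tw V U Ntp by rewrite hN'; apply: pinv_tw.
have EN : EA N = tw U U Et.
  rewrite /EA pN hN' twM // -(tw1 U1) -twB; congr (tw U U _).
  rewrite /Nt /Ntp /Et (scalar_mx_block r p); bsimp; rewrite mulmxV //.
  by rewrite opp_block_mx add_block_mx; bsimp.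
have FN : FA N = tw V V Ft.
  rewrite /FA pN hN' twM // -(tw1 V1) -twB; congr (tw V V _).
  rewrite /Nt /Ntp /Ft (scalar_mx_block r q); bsimp; rewrite mulVmx //.
  by rewrite opp_block_mx add_block_mx; bsimp.
have invX : invmx X = tw U U (invmx Xt) by rewrite hX' inv_tw.
have invY : invmx Y = tw V V (invmx Yt) by rewrite hY' inv_tw.
pose Rt := Xt *m Et *m invmx Xt *m (Et - 1%:M).
pose Lt := (Ft - 1%:M) *m invmx Yt *m Ft *m Yt.
have eR : R = tw U U Rt.
  by rewrite /R invX EN hX' -(tw1 U1) -twB !twM.
have eL : L = tw V V Lt.
  by rewrite /L invY FN hY' -(tw1 V1) -twB !twM.
have := @tilde C r p q D X1 X2 X4 Y1 Y3 Y4 Du X1u X4u Y1u Y4u.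
move=> /= hT.
rewrite eL eR invX invY pN /M hN' hX' hY' !twM //.
rewrite (pinv_tw hU hV hT).
rewrite !ctmx_tw !twM // !tw1D // !inv_tw // !twM //.
Qed.
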